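(* If $G$ is a connected graph, then $\mathrm{id}^{\leq 3}(G)\leq \left\lceil \frac{3|E(G)|}{4}\right\rceil$.
   Context: All graphs are finite and simple. For an oriented graph $D$ and a set $X\subseteq V(D)$, the inversion of $X$ reverses the orientation of every arc with both endvertices in $X$. For an integer $p\ge 2$, a $(\leq p)$-inversion is the inversion of a set of at most $p$ vertices. For a graph $G$, $\mathrm{id}^{\leq p}(G)$ (the $(\leq p)$-inversion diameter) is the maximum, over all ordered pairs $(\vec G_1,\vec G_2)$ of orientations of $G$ (on the same labelled vertex set), of the minimum number of $(\leq p)$-inversions whose successive application transforms $\vec G_1$ into $\vec G_2$. *)

(* Defs.v *)
From mathcomp Require Import all_boot.
Set Implicit Arguments. Unset Strict Implicit. Unset Printing Implicit Defensive.

Definition simple_graph (T : finType) (e : rel T) : Prop :=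
  symmetric e /\ irreflexive e.

Definition connected_graph (T : finType) (e : rel T) : Prop :=
  forall x y : T, connect e x y.

Definition edges (T : finType) (e : rel T) : {set {set T}} :=
  [set A : {set T} | [exists x, [exists y, e x y && (A == [set x; y])]]].

(* An orientation D of G: o x y means arc x -> y; every edge gets exactly
   one direction, and arcs only on edges. *)
Definition orientation (T : finType) (e : rel T) (o : rel T) : Prop :=
  forall x y : T, (o x y -> e x y) /\ (e x y -> o x y = ~~ o y x).

Definition invert (T : finType) (X : {set T}) (o : rel T) : rel T :=
  fun x y => if (x \in X) && (y \in X) then o y x else o x y.

Definition invert_seq (T : finType) (s : seq {set T}) (o : rel T) : rel T :=
  foldl (fun o X => invert X o) o s.

Definition inv_dist_le (T : finType) (p : nat) (o1 o2 : rel T) (k : nat) : Prop :=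
  exists s : seq {set T},
    size s <= k /\ all (fun X : {set T} => #|X| <= p) s /\
    forall x y, invert_seq s o1 x y = o2 x y.

(* id^{<= p}(G) <= k : for every ordered pair of orientations of G, the
   (<= p)-inversion distance is at most k. *)
Definition inv_diam_le (T : finType) (p : nat) (e : rel T) (k : nat) : Prop :=
  forall o1 o2 : rel T, orientation e o1 -> orientation e o2 ->
    inv_dist_le p o1 o2 k.

(* Main.v *)
Require Import Defs.
From mathcomp Require Import all_boot zify.
Set Implicit Arguments. Unset Strict Implicit. Unset Printing Implicit Defensive.

Section Basics.
Variable T : finType.

Definition cnt (s : seq {set T}) (x y : T) :=
  count (fun X : {set T} => (x \in X) && (y \in X)) s.

Lemma invert_seq_par (s : seq {set T}) (o : rel T) x y :
  invert_seq s o x y = if odd (cnt s x y) then o y x else o x y.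
Proof.
elim: s o => [|X s IH] o //=.
rewrite IH /invert /cnt /= oddD.
by case: (x \in X); case: (y \in X); case: (odd _).
Qed.

Lemma cnt_cat (s1 s2 : seq {set T}) x y : cnt (s1 ++ s2) x y = cnt s1 x y + cnt s2 x y.
Proof. by rewrite /cnt count_cat. Qed.

Lemma cntC (s : seq {set T}) x y : cnt s x y = cnt s y x.
Proof. by apply: eq_count => X; rewrite andbC. Qed.

Lemma cnt0 (s : seq {set T}) (U : {set T}) x y : all (fun X : {set T} => X \subset U) s ->
  ~~ ((x \in U) && (y \in U)) -> cnt s x y = 0.
Proof.
move=> hs hxy; apply/eqP; rewrite -leqn0 leqNgt -has_count.
apply/hasP => -[X XS /andP[xX yX]].
move/allP: hs => /(_ X XS) sub.
by move: hxy; rewrite (subsetP sub _ xX) (subsetP sub _ yX).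
Qed.

Lemma set2_eqP (x y u v : T) : [set x; y] = [set u; v] ->
  (x = u /\ y = v) \/ (x = v /\ y = u).
Proof.
move=> E.
have xi : x \in [set u; v] by rewrite -E !inE eqxx.
have yi : y \in [set u; v] by rewrite -E !inE eqxx orbT.
have ui : u \in [set x; y] by rewrite E !inE eqxx.
have vi : v \in [set x; y] by rewrite E !inE eqxx orbT.
move: xi yi ui vi; rewrite !inE.
case/orP=> /eqP xe; case/orP=> /eqP ye; subst; auto;
  move=> /orP[] /eqP H1 /orP[] /eqP H2; subst; auto.
Qed.

Lemma set2C (x y : T) : [set x; y] = [set y; x].
Proof. by apply/setP=> z; rewrite !inE orbC. Qed.

Lemma edgesP (h : rel T) x y : h x y -> [set x; y] \in edges h.
Proof.
move=> hxy; rewrite inE; apply/existsP; exists x; apply/existsP; exists y.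
by rewrite hxy eqxx.
Qed.

Lemma edgesE (h : rel T) A : A \in edges h -> exists x y, h x y /\ A = [set x; y].
Proof.
rewrite inE => /existsP[x /existsP[y /andP[hxy /eqP ->]]]; by exists x, y.
Qed.

Definition remove (h : rel T) (R : {set {set T}}) : rel T :=
  fun x y => h x y && ([set x; y] \notin R).

Lemma remove_sym h (R : {set {set T}}) : symmetric h -> symmetric (remove h R).
Proof. by move=> hs x y; rewrite /remove hs set2C. Qed.

Lemma remove_card h (R : {set {set T}}) : R \subset edges h ->
  #|edges (remove h R)| + #|R| <= #|edges h|.
Proof.
move=> sub.
have : edges (remove h R) \subset edges h :\: R.
  apply/subsetP=> A /edgesE [x [y [/andP[hxy nR] ->]]].
  by rewrite inE nR edgesP.
move/subset_leq_card; rewrite cardsD (setIidPr sub).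
have := subset_leq_card sub; lia.
Qed.

Lemma set3E (U : finType) (a b c : U) : [set a; b; c] = c |: [set a; b].
Proof. by apply/setP=> z; rewrite !inE orbC. Qed.

Lemma in3E (U : finType) (a b c z : U) :
  (z \in [set a; b; c]) = [|| z == a, z == b | z == c].
Proof. by rewrite !inE orbA. Qed.

Lemma card3 (A B C : {set T}) : A != B -> B != C -> A != C -> #|[set A; B; C]| = 3.
Proof.
move=> ab bc ac.
rewrite set3E cardsU1 cards2 !inE ab.
by rewrite eq_sym (negbTE ac) eq_sym (negbTE bc).
Qed.

Lemma card_le3 (a b c : T) : #|[set a; b; c]| <= 3.
Proof.
rewrite set3E cardsU1 cards2; by case: (_ \notin _); case: (_ != _).
Qed.

Lemma card_le2 (a b : T) : #|[set a; b]| <= 2.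
Proof. by rewrite cards2; case: (_ != _). Qed.

End Basics.

Definition good (T : finType) (r : T) (g : rel T) := forall x y, g x y -> connect g r x.

Section Dist.
Variable T : finType.
Variable h : rel T.
Variable r : T.
Hypothesis hsym : symmetric h.

Fixpoint reach k : {set T} :=
  if k is k'.+1 then reach k' :|: [set y | [exists x in reach k', h x y]]
  else [set r].

Lemma reach_conn k x : x \in reach k -> connect h r x.
Proof.
elim: k x => [|k IH] x /=; first by rewrite inE => /eqP ->; exact: connect0.
rewrite !inE => /orP[/IH //|/existsP[y /andP[yk hyx]]].
exact: connect_trans (IH _ yk) (connect1 hyx).
Qed.

Lemma path_reach p z k : z \in reach k -> path h z p -> last z p \in reach (k + size p).
Proof.
elim: p z k => [|y p IH] z k /=; first by rewrite addn0.
move=> zk /andP[hzy pp]; rewrite addnS -addSn; apply: IH pp.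
by rewrite /= !inE; apply/orP; right; apply/existsP; exists z; rewrite zk hzy.
Qed.

Lemma exd x : exists k, (x \in reach k) || ~~ connect h r x.
Proof.
case: (boolP (connect h r x)) => [/connectP[p pp ->]|]; last by exists 0; rewrite orbT.
exists (0 + size p); apply/orP; left; apply: path_reach => //; by rewrite /= inE.
Qed.

Definition dist x := ex_minn (exd x).

Lemma dist_reach x : connect h r x -> x \in reach (dist x).
Proof. by rewrite /dist; case: ex_minnP => k /orP[// | /negP] H _ /H. Qed.

Lemma dist_min x k : x \in reach k -> dist x <= k.
Proof. by move=> xk; rewrite /dist; case: ex_minnP => m _; apply; rewrite xk. Qed.

Lemma dist_r : dist r = 0.
Proof. by apply/eqP; rewrite -leqn0; apply: dist_min; rewrite /= inE. Qed.

Lemma dist0 x : connect h r x -> dist x = 0 -> x = r.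
Proof. by move=> /dist_reach + d0; rewrite d0 /= inE => /eqP. Qed.

Lemma F1 x y : connect h r x -> h x y -> connect h r y /\ dist y <= (dist x).+1.
Proof.
move=> cx hxy; split; first exact: connect_trans cx (connect1 hxy).
apply: dist_min => /=; rewrite !inE; apply/orP; right; apply/existsP; exists x.
by rewrite dist_reach.
Qed.

Lemma F2 x : connect h r x -> x != r ->
  exists y, [/\ connect h r y, h y x & (dist y).+1 = dist x].
Proof.
move=> cx xr.
have := dist_reach cx.
case E: (dist x) => [|k]; first by move: xr; rewrite (dist0 cx E) eqxx.
rewrite /= !inE => /orP[xk|/existsP[y /andP[yk hyx]]].
  by have := dist_min xk; rewrite E ltnn.
have cy := reach_conn yk.
exists y; split => //.
have := dist_min yk; have := (F1 cy hyx).2; rewrite E; lia.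
Qed.

Hypothesis hconn : good r h.

Lemma good_of (h' : rel T) (M : pred T) :
  (forall x y, h' x y -> h x y) -> symmetric h' ->
  (forall x y, h x y -> connect h r x -> M y -> dist y < dist x -> M x) ->
  (forall x y, h x y -> ~~ h' x y -> connect h r x -> dist y < dist x -> M x) ->
  (forall x y, h' x y -> M x -> ~~ M y) -> good r h'.
Proof.
move=> sub h's up desc nb.
have key : forall x, connect h r x -> ~~ M x -> connect h' r x.
  move=> x; have [n] := ubnP (dist x); elim: n x => // n IH x ltx cx nMx.
  case: (eqVneq x r) => [->|xr]; first exact: connect0.
  have [y [cy hyx dyx]] := F2 cx xr.
  have nMy : ~~ M y.
    apply/negP => My; move/negP: nMx; apply; apply: (up x y) => //; first by rewrite hsym.
    by rewrite -dyx.
  have h'xy : h' x y.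
    apply/negPn/negP => nh; move/negP: nMx; apply; apply: (desc x y) => //; first by rewrite hsym.
    by rewrite -dyx.
  apply: connect_trans (IH y _ cy nMy) (connect1 _); first by rewrite -ltnS dyx.
  by rewrite h's.
move=> x y hxy.
case: (boolP (M x)) => Mx; last exact: key (hconn (sub _ _ hxy)) Mx.
have nMy := nb x y hxy Mx.
have cy : connect h r y.
  by apply: (@hconn y x); rewrite hsym; exact: sub _ _ hxy.
apply: connect_trans (key y cy nMy) (connect1 _); by rewrite h's.
Qed.

End Dist.

Ltac clean := repeat match goal with
 | H : @eq ?A _ _ |- _ => unify A nat; revert H
 | H : is_true (_ <= _) |- _ => revert H
 | H : ?P |- _ => match type of P with Prop => clear H end
end.
Ltac slia := clean; first [lia | intros; exfalso; lia].

Section Piece.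
Variable T : finType.
Variable h : rel T.
Variable r : T.
Hypothesis hsym : symmetric h.
Hypothesis hirr : irreflexive h.
Hypothesis hconn : good r h.

Lemma piece_exists :
  (exists c a b, [/\ h c a, h c b, a != b, ~~ h a b &
       good r (remove h [set [set c; a]; [set c; b]])])
  \/ (exists a b c, [/\ h a b, h b c, h c a &
       good r (remove h [set [set a; b]; [set b; c]; [set c; a]])])
  \/ (exists x y, forall u w, h u w -> [set u; w] = [set x; y]).
Proof.
have neq : forall x y, h x y -> x != y.
  by move=> x y hxy; apply/eqP => E; move: hxy; rewrite E hirr.
have [v [cv vmax]] : exists v, connect h r v /\ forall x, connect h r x -> dist h r x <= dist h r v.
  case: (arg_maxnP (dist h r) (connect0 h r)) => v cv vm.
  by exists v; split => // x cx; apply: vm.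
have [D dD] : exists D, dist h r v = D by eexists.
rewrite dD in vmax.
have cnb : forall x y, h x y -> connect h r y.
  by move=> x y hxy; apply: (@hconn y x); rewrite hsym.
have lb : forall x y, connect h r x -> h x y -> dist h r x <= (dist h r y).+1.
  move=> x y cx hxy; have cy := cnb _ _ hxy.
  by have := (F1 cy (_ : h y x)).2; apply; rewrite hsym.
case: (boolP [exists w, [exists a, [exists b,
   [&& connect h r w, dist h r w == D, h w a, h w b & a != b]]]]).
- move=> /existsP[w /existsP[a /existsP[b /and5P[cw /eqP dw hwa hwb ab]]]].
  case: (boolP (h a b)) => hab.
  + right; left; exists w, a, b; split => //; first by rewrite hsym.
    set R := [set [set w; a]; [set a; b]; [set b; w]].
    have lb3 : forall z, z \in [set w; a; b] -> connect h r z /\ D <= (dist h r z).+1.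
      move=> z; rewrite in3E => /or3P[] /eqP ->.
      * by split => //; rewrite dw.
      * by split; [apply: cnb hwa | rewrite -dw; apply: lb].
      * by split; [apply: cnb hwb | rewrite -dw; apply: lb].
    have subR : forall x y, [set x; y] \in R -> (x \in [set w; a; b]) && (y \in [set w; a; b]).
      move=> x y; rewrite /R (in3E _ _ _ [set x; y]) => /or3P[] /eqP /set2_eqP [] [-> ->];
        by rewrite !in3E !eqxx ?orbT.
    have allR : forall x y, x \in [set w; a; b] -> y \in [set w; a; b] -> x != y ->
        [set x; y] \in R.
      move=> x y; rewrite !in3E => /or3P[] /eqP -> /or3P[] /eqP ->; rewrite ?eqxx // => _;
      rewrite ?(set2C a w) ?(set2C b a) ?(set2C w b) ?eqxx ?orbT //.
    apply: (@good_of _ h r hsym hconn _ (fun x => (x \in [set w; a; b]) && (dist h r x == D))).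
    * by move=> x y /andP[].
    * exact: remove_sym.
    * move=> x y hxy cx /andP[_ /eqP dy] lt; have := vmax x cx; slia.
    * move=> x y hxy nh cx lt.
      have inR : [set x; y] \in R by move: nh; rewrite /remove hxy /= negbK.
      case/andP: (subR _ _ inR) => xin yin.
      rewrite xin /=; apply/eqP; have := vmax x cx; have := (lb3 y yin).2; idtac; slia.
    * move=> x y /andP[hxy nR] /andP[xin _]; apply/negP => /andP[yin _].
      by move: nR; rewrite allR // neq.
  + left; exists w, a, b; split => //.
    apply: (@good_of _ h r hsym hconn _ (fun x => x == w)).
    * by move=> x y /andP[].
    * exact: remove_sym.
    * move=> x y hxy cx /eqP ey lt; have := vmax x cx; move: lt; rewrite ey dw; slia.
    * move=> x y hxy nh cx lt.
      have : [set x; y] \in [set [set w; a]; [set w; b]] by move: nh; rewrite /remove hxy /= negbK.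
      rewrite !inE => /orP[] /eqP /set2_eqP [] [ex ey]; rewrite ex ?eqxx //;
        move: lt; rewrite ex ey dw; have := vmax a (cnb _ _ hwa); have := vmax b (cnb _ _ hwb); slia.
    * by move=> x y /andP[hxy _] /eqP ex; apply/negP => /eqP ey; move: hxy; rewrite ex ey hirr.
- move=> /existsPn H.
  have uniq : forall w a b, connect h r w -> dist h r w = D -> h w a -> h w b -> a = b.
    move=> w a b cw dw hwa hwb; apply/eqP; apply/negPn/negP => nab.
    move/negP: (H w); apply; apply/existsP; exists a; apply/existsP; exists b.
    by rewrite cw dw eqxx hwa hwb nab.
  case: (eqVneq D 0) => [D0|Dn0].
    right; right; exists r, r => u w huw; exfalso.
    have cu := hconn huw; have cw := cnb _ _ huw.
    have eu := dist0 cu (_ : _); have ew := dist0 cw (_ : _).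
    have := vmax u cu; have := vmax w cw; rewrite D0 !leqn0 => /eqP/ew ewr /eqP/eu eur.
    by move: huw; rewrite ewr eur hirr.
  have vr : v != r by apply/eqP => E; move: Dn0; rewrite -dD E dist_r eqxx.
  have [p [cp hpv dp]] := F2 cv vr.
  rewrite dD in dp.
  case: (boolP [exists u, [&& h p u, u != v & dist h r u == D]]).
  + move=> /existsP[u /and3P[hpu uv /eqP du]].
    have cu := cnb _ _ hpu.
    have nuv : forall z, h v z -> z = p by move=> z hvz; apply: (uniq v) => //; rewrite hsym.
    have nuu : forall z, h u z -> z = p by move=> z huz; apply: (uniq u) => //; rewrite hsym.
    left; exists p, v, u; split => //; first by rewrite eq_sym.
      by apply/negP => /nuv eup; move: hpu; rewrite eup hirr.
    apply: (@good_of _ h r hsym hconn _ (fun x => (x == v) || (x == u))).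
    * by move=> x y /andP[].
    * exact: remove_sym.
    * move=> x y hxy cx /orP[] /eqP ey lt; have := vmax x cx; move: lt; rewrite ey ?du ; slia.
    * move=> x y hxy nh cx lt.
      have : [set x; y] \in [set [set p; v]; [set p; u]] by move: nh; rewrite /remove hxy /= negbK.
      rewrite !inE => /orP[] /eqP /set2_eqP [] [ex ey]; rewrite ex ?eqxx ?orbT //;
        move: lt dp; rewrite ex ey ?du ; slia.
    * move=> x y /andP[hxy nR] /orP[] /eqP ex; subst x.
        by have ey := nuv y hxy; subst y; move: nR; rewrite (set2C v p) !inE eqxx.
      by have ey := nuu y hxy; subst y; move: nR; rewrite (set2C u p) !inE eqxx orbT.
  + move=> /existsPn nB1.
    have only : forall u, h p u -> dist h r u = D -> u = v.
      move=> u hpu du; apply/eqP; apply/negPn/negP => uv.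
      by move/negP: (nB1 u); apply; rewrite hpu uv du eqxx.
    have nuv : forall z, h v z -> z = p by move=> z hvz; apply: (uniq v) => //; rewrite hsym.
    case: (eqVneq p r) => [pr|pnr].
    * right; right; exists r, v => x y hxy.
      have allrv : forall z, connect h r z -> z = r \/ z = v.
        move=> z cz; case: (eqVneq z r) => [->|zr]; first by left.
        right; have [q [cq hqz dq]] := F2 cz zr.
        have D1 : D = 1 by rewrite -dp pr dist_r.
        have dz := vmax z cz; rewrite  D1 in dz.
        have dq0 : dist h r q = 0 by move: dq dz; slia.
        apply: only; first by rewrite pr -(dist0 cq dq0).
        move: dq dz; rewrite D1; slia.
      have cx := hconn hxy; have cy := cnb _ _ hxy.
      have nxy := neq _ _ hxy.
      case: (allrv x cx) => ex; case: (allrv y cy) => ey; rewrite ex ey in nxy *;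
        first [by rewrite eqxx in nxy | exact: set2C | done].
    * have [q [cq hqp dq]] := F2 cp pnr.
      have dv : dist h r v = D by rewrite dD.
      left; exists p, v, q; split => //; first by rewrite hsym.
      - by apply/eqP => E; move: dq dp; rewrite -E dv; slia.
      - by apply/negP => /nuv E; move: dq; rewrite E; slia.
      apply: (@good_of _ h r hsym hconn _ (fun x => (x == v) || (x == p))).
      + by move=> x y /andP[].
      + exact: remove_sym.
      + move=> x y hxy cx /orP[] /eqP ey lt.
          by have := vmax x cx; move: lt; rewrite ey ; slia.
        apply/orP; left; apply/eqP; apply: only; first by rewrite hsym -ey.
        by have := vmax x cx; move: lt; rewrite ey; slia.
      + move=> x y hxy nh cx lt.
        have : [set x; y] \in [set [set p; v]; [set p; q]] by move: nh; rewrite /remove hxy /= negbK.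
        rewrite !inE => /orP[] /eqP /set2_eqP [] [ex ey]; rewrite ex ?eqxx ?orbT //;
          move: lt; rewrite ex ey -dq; slia.
      + move=> x y /andP[hxy nR] /orP[] /eqP ex.
          by subst x; have ey := nuv y hxy; subst y; move: nR; rewrite (set2C v p) !inE eqxx.
        apply/negP => /orP[] /eqP ey.
          by move: nR; rewrite ex ey !inE eqxx.
        by move: hxy; rewrite ex ey hirr.
Qed.

End Piece.

Ltac subt := repeat (apply/andP; split); rewrite ?subxx //;
  apply/subsetP => z; rewrite !inE => /orP[] ->; rewrite ?orbT //=.

Section Key.
Variable T : finType.
Variable r : T.

Lemma remove_irr (h : rel T) (R : {set {set T}}) : irreflexive h -> irreflexive (remove h R).
Proof. by move=> hi x; rewrite /remove hi. Qed.

Lemma key n : forall h : rel T, #|edges h| <= n -> symmetric h -> irreflexive h -> good r h ->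
  forall w : rel T, (forall x y, w x y = w y x) ->
  exists s : seq {set T}, [/\ size s <= (3 * #|edges h| + 3) %/ 4,
     all (fun X : {set T} => #|X| <= 3) s &
     forall x y, h x y -> odd (cnt s x y) = w x y].
Proof.
elim: n => [|n IH] h hn hsym hirr hconn w wsym.
  exists [::]; split => // x y hxy.
  move: hn; rewrite leqn0 cards_eq0 => /eqP E.
  by move: (edgesP hxy); rewrite E inE.
have neq : forall x y, h x y -> x != y.
  by move=> x y hxy; apply/eqP => E; move: hxy; rewrite E hirr.
have fin : forall (R : {set {set T}}) s',
   let t := fun x y => w x y (+) odd (cnt s' x y) in
   forall s'', (forall x y, remove h R x y -> odd (cnt s' x y) = w x y) ->
   (forall x y, h x y -> [set x; y] \in R -> odd (cnt s'' x y) = t x y) ->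
   (forall x y, remove h R x y -> cnt s'' x y = 0) ->
   forall x y, h x y -> odd (cnt (s' ++ s'') x y) = w x y.
  move=> R s' t s'' ok' inR out x y hxy.
  rewrite cnt_cat oddD.
  case: (boolP ([set x; y] \in R)) => xyR.
    by rewrite inR // /t; case: (w x y); case: (odd _).
  have h'xy : remove h R x y by rewrite /remove hxy xyR.
  by rewrite out // addbF ok'.
case: (piece_exists hsym hirr hconn) =>
  [[c [a [b [hca hcb ab nhab gR]]]] | [[a [b [c [hab hbc hca gR]]]] | [x [y Hxy]]]].
-
  set R := [set [set c; a]; [set c; b]].
  have ca := neq _ _ hca; have cb := neq _ _ hcb.
  have Rsub : R \subset edges h.
    by apply/subsetP => A /set2P [] ->; apply: edgesP.
  have cardR : #|R| = 2.
    rewrite cards2; suff -> : [set c; a] != [set c; b] by [].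
    apply/eqP => /set2_eqP [] [E1 E2].
      by move: ab; rewrite E2 eqxx.
    by move: ca; rewrite E2 eqxx.
  have hm := remove_card Rsub; rewrite cardR in hm.
  have hn' : #|edges (remove h R)| <= n by move: hm hn; clear; lia.
  have [s' [sz' all' ok']] := IH (remove h R) hn' (remove_sym _ hsym)
     (remove_irr _ hirr) gR w wsym.
  set t := fun x y => w x y (+) odd (cnt s' x y).
  set s'' := if t c a && t c b then [:: [set c; a; b]]
             else if t c a then [:: [set c; a]] else if t c b then [:: [set c; b]] else [::].
  have sz'' : size s'' <= 1 by rewrite /s''; case: (t c a); case: (t c b).
  have all'' : all (fun X : {set T} => #|X| <= 3) s''.
    rewrite /s''; case: (t c a); case: (t c b) => //=; rewrite ?card_le3 //=;
      by rewrite (leq_trans (card_le2 _ _)).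
  exists (s' ++ s''); split.
  + by rewrite size_cat; move: sz' sz'' hm hn; clear; lia.
  + by rewrite all_cat all' all''.
  apply: (fin R) => //.
  + have ac : (a == c) = false by rewrite eq_sym (negbTE ca).
    have bc : (b == c) = false by rewrite eq_sym (negbTE cb).
    have ba : (b == a) = false by rewrite eq_sym (negbTE ab).
    have tS : forall x y, t x y = t y x by move=> x y; rewrite /t wsym cntC.
    have key1 : odd (cnt s'' c a) = t c a.
      rewrite /s'' /cnt; case: (t c a); case: (t c b) => //=;
      by rewrite ?in3E ?inE ?eqxx ?ac ?bc ?ba ?(negbTE ab) ?orbT /=.
    have key2 : odd (cnt s'' c b) = t c b.
      rewrite /s'' /cnt; case: (t c a); case: (t c b) => //=;
      by rewrite ?in3E ?inE ?eqxx ?ac ?bc ?ba ?(negbTE ab) ?orbT /=.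
    move=> x y _; rewrite !inE => /orP[] /eqP /set2_eqP [] [-> ->] //;
      first [exact: key1 | exact: key2 | exact: key3 |
        rewrite cntC wsym (cntC s'); first [exact: key1 | exact: key2 | exact: key3]].
  + move=> x y /andP[hxy xyR].
    apply: (cnt0 (U := [set c; a; b])).
      rewrite /s''; case: (t c a); case: (t c b) => /=; rewrite ?andbT //; subt.
    apply/negP => /andP[]; rewrite !in3E => /or3P[] /eqP ex /or3P[] /eqP ey;
      subst x y; rewrite ?hirr // in hxy;
      try (by move: xyR; rewrite ?(set2C a c) ?(set2C b c) !inE eqxx ?orbT);
      by move: nhab; rewrite ?hxy // hsym hxy.
-
  set R := [set [set a; b]; [set b; c]; [set c; a]].
  have nab := neq _ _ hab; have nbc := neq _ _ hbc; have nca := neq _ _ hca.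
  have ba : (b == a) = false by rewrite eq_sym (negbTE nab).
  have cb : (c == b) = false by rewrite eq_sym (negbTE nbc).
  have ac : (a == c) = false by rewrite eq_sym (negbTE nca).
  have ab : (a == b) = false by apply: negbTE.
  have bc : (b == c) = false by apply: negbTE.
  have ca : (c == a) = false by apply: negbTE.
  have Rsub : R \subset edges h.
    by apply/subsetP => A; rewrite (in3E _ _ _ A) => /or3P[] /eqP ->; apply: edgesP.
  have cardR : #|R| = 3.
    apply: card3; apply/eqP => /set2_eqP [] [E1 E2]; subst;
      by rewrite ?eqxx in ab bc ca ba cb ac.
  have hm := remove_card Rsub; rewrite cardR in hm.
  have hn' : #|edges (remove h R)| <= n by move: hm hn; clear; lia.
  have [s' [sz' all' ok']] := IH (remove h R) hn' (remove_sym _ hsym)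
     (remove_irr _ hirr) gR w wsym.
  set t := fun x y => w x y (+) odd (cnt s' x y).
  set s'' := if [&& t a b, t b c & t c a] then [:: [set a; b; c]]
             else (if t a b then [:: [set a; b]] else [::]) ++
                  (if t b c then [:: [set b; c]] else [::]) ++
                  (if t c a then [:: [set c; a]] else [::]).
  have sz'' : size s'' <= 2 by rewrite /s''; case: (t a b); case: (t b c); case: (t c a).
  have all'' : all (fun X : {set T} => #|X| <= 3) s''.
    rewrite /s''; case: (t a b); case: (t b c); case: (t c a) => //=;
      rewrite ?card_le3 //= ?(leq_trans (card_le2 _ _)) //.
  exists (s' ++ s''); split.
  + by rewrite size_cat; move: sz' sz'' hm hn; clear; lia.
  + by rewrite all_cat all' all''.
  apply: (fin R) => //.
  + have tS : forall x y, t x y = t y x by move=> x y; rewrite /t wsym cntC.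
    have key1 : odd (cnt s'' a b) = t a b.
      rewrite /s'' /cnt; case: (t a b); case: (t b c); case: (t c a) => //=;
      by rewrite ?in3E ?inE ?eqxx ?ab ?bc ?ca ?ba ?cb ?ac ?orbT.
    have key2 : odd (cnt s'' b c) = t b c.
      rewrite /s'' /cnt; case: (t a b); case: (t b c); case: (t c a) => //=;
      by rewrite ?in3E ?inE ?eqxx ?ab ?bc ?ca ?ba ?cb ?ac ?orbT.
    have key3 : odd (cnt s'' c a) = t c a.
      rewrite /s'' /cnt; case: (t a b); case: (t b c); case: (t c a) => //=;
      by rewrite ?in3E ?inE ?eqxx ?ab ?bc ?ca ?ba ?cb ?ac ?orbT.
    move=> x y _; rewrite in3E => /or3P[] /eqP /set2_eqP [] [-> ->] //;
      first [exact: key1 | exact: key2 | exact: key3 |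
        rewrite cntC wsym (cntC s'); first [exact: key1 | exact: key2 | exact: key3]].
  + move=> x y /andP[hxy xyR].
    apply: (cnt0 (U := [set a; b; c])).
      rewrite /s''; case: (t a b); case: (t b c); case: (t c a) => /=; rewrite ?andbT //; subt.
    apply/negP => /andP[]; rewrite !in3E => /or3P[] /eqP ex /or3P[] /eqP ey;
      subst x y; rewrite ?hirr // in hxy;
      by move: xyR; rewrite ?(set2C b a) ?(set2C c b) ?(set2C a c) in3E eqxx ?orbT.
-
  exists (if h x y && w x y then [:: [set x; y]] else [::]); split.
  + case: (boolP (h x y)) => //= hxy.
    have : 0 < #|edges h| by apply/card_gt0P; exists [set x; y]; apply: edgesP.
    by case: (w x y) => //=; move: hn; clear; lia.
  + case: (h x y && w x y) => //=; by rewrite (leq_trans (card_le2 _ _)).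
  move=> u v huv.
  have [[eu ev]|[eu ev]] := set2_eqP (Hxy u v huv); subst u v; last rewrite cntC (wsym y x);
   [move: huv => hxy | have hxy : h x y by rewrite hsym].
  all: rewrite hxy /=; case: (w x y) => //=; rewrite /cnt /= !inE !eqxx ?orbT //.
Qed.

End Key.

(* ceil(3|E|/4) = (3|E| + 3) %/ 4 *)
Theorem mainTheorem4 (T : finType) (e : rel T) :
  simple_graph e -> connected_graph e ->
  inv_diam_le 3 e ((3 * #|edges e| + 3) %/ 4).
Proof.
move=> [esym eirr] econn o1 o2 or1 or2.
case: (pickP T) => [r _ | T0]; last first.
  by exists [::]; split => //; split => // x; have := T0 x.
set w := fun x y => o1 x y != o2 x y.
have ne : forall (o : rel T) x y, orientation e o -> ~~ e x y -> o x y = false.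
  by move=> o x y oo nexy; apply/negP => /(proj1 (oo x y)); apply/negP.
have wsym : forall x y, w x y = w y x.
  move=> x y; rewrite /w; case: (boolP (e x y)) => exy.
    by rewrite (proj2 (or1 x y) exy) (proj2 (or2 x y) exy) ; by case: (o1 y x); case: (o2 y x).
  have eyx : ~~ e y x by rewrite esym.
  by rewrite (ne o1 x y) // (ne o2 x y) // (ne o1 y x) // (ne o2 y x).
have hconn : good r e by move=> x y _; apply: econn.
have [s [sz al ok]] := key (leqnn _) esym eirr hconn wsym.
exists s; split => //; split => // x y.
rewrite invert_seq_par.
case: (boolP (e x y)) => exy.
  rewrite ok // /w.
  have E1 := proj2 (or1 x y) exy.
  by rewrite E1; case: (o1 y x); case: (o2 x y).
have eyx : ~~ e y x by rewrite esym.
by rewrite (ne o1 x y) // (ne o2 x y) // (ne o1 y x) //; case: (odd _).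
Qed.
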